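(* Let $k\ge1$, $k_1,\dots,k_N\in\{0,\dots,k\}$, $M_a=\#\{j\mid k_j=a\}$ ($1\le a\le k$), and let $V_{\mathbf M}$ be the fusion product $\Pi^{(k_1)}*\cdots*\Pi^{(k_N)}$ with cyclic vector $\mathbf v$ (the image of $v^{(k_1)}\otimes\cdots\otimes v^{(k_N)}$). For an indeterminate $\xi$ and every integer $\nu\ge0$, \[ \deg_z\bigl(X(z)+\xi Z(z)-\xi^2Y(z)\bigr)^\nu\mathbf v\le\sum_{i=1}^k\min(\nu,i)M_i-\nu . \]
   Context: $\mathfrak{o}_5=\{\sum c_{ab}e_{ab}\in\mathfrak{gl}_5\mid c_{ab}+c_{6-b,6-a}=0\}$, $X=e_{12}-e_{45}$, $Y=e_{14}-e_{25}$, $Z=\sqrt2(-e_{13}+e_{35})$; $\mathfrak a=\mathrm{span}(X,Y,Z)$ is abelian. $\Pi^{(k)}$ is the irreducible $\mathfrak{o}_5$-module whose highest weight is $k$ times that of $\mathbb{C}^5$, $v^{(k)}$ its lowest weight vector. Fusion product: for pairwise distinct $\zeta_1,\dots,\zeta_N$, $\mathfrak{o}_5[t]$ acts on $\bigotimes_a\Pi^{(k_a)}$ with $x\otimes t^i$ acting on the $a$-th factor by $\zeta_a^ix$; filter by $U^{\le d}(\mathfrak{o}_5[t])(\otimes_a v^{(k_a)})$ (monomials of total $t$-degree $\le d$); $V_{\mathbf M}$ is the associated graded $\mathfrak{o}_5[t]$-module. For $\eta\in\mathfrak a$, $\eta_i$ denotes the action of $\eta\otimes t^i$ on $V_{\mathbf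 M}$ and $\eta(z)=\sum_{i\ge0}\eta_iz^i$ (a polynomial in $z$ since $\eta_i=0$ for $i\ge N$). $\deg_z P\le d$ means the coefficients of $z^j$, $j>d$, in the vector-valued polynomial $P$ (with coefficients polynomial in $\xi$) vanish; if $d<0$ this means $P=0$. *)

(* Defs.v *)
From HB Require Import structures.
From mathcomp Require Import all_boot all_order all_algebra.
From mathcomp Require Import mpoly.
Set Implicit Arguments.
Unset Strict Implicit.
Unset Printing Implicit Defensive.
Import Order.TTheory GRing.Theory Num.Theory.
Local Open Scope ring_scope.

Section Defs.
Variable C : numClosedFieldType.

(* 0-based indices: index b of C^5 (1-based) is ord (b-1); 6-b corresponds to rev_ord *)
Local Notation o i := (@inord 4 i).

Definition in_o5 (A : 'M[C]_5) : Prop :=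
  forall a b : 'I_5, A a b + A (rev_ord b) (rev_ord a) = 0.

Definition Xo5 : 'M[C]_5 := delta_mx (o 0) (o 1) - delta_mx (o 3) (o 4).
Definition Yo5 : 'M[C]_5 := delta_mx (o 0) (o 3) - delta_mx (o 1) (o 4).
Definition Zo5 : 'M[C]_5 := sqrtC 2 *: (delta_mx (o 2) (o 4) - delta_mx (o 0) (o 2)).

(* Model of  (x) _a Sym^{k_a}(C^5) : polynomials in variables x_{a,b}
   (a < N, b < 5); the factor a is the degree-k_a part in x_{a,.}.
   Pi^(k_a) is the o_5-submodule of Sym^{k_a} C^5 generated by the lowest
   weight vector e_5^{k_a}. *)
Definition var (N : nat) (a : 'I_N) (b : 'I_5) : 'I_(N * 5) := mxvec_index a b.

(* action of  A (x) t^i  on the tensor product: on the a-th factor,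
   zeta_a^i A acting on Sym(C^5) as the derivation sum_{b,c} A_bc x_b d/dx_c *)
Definition act (N : nat) (zeta : 'I_N -> C) (Ai : 'M[C]_5 * nat)
  (p : {mpoly C[N * 5]}) : {mpoly C[N * 5]} :=
  \sum_(a < N) \sum_(b < 5) \sum_(c < 5)
     (zeta a ^+ Ai.2 * Ai.1 b c) *: ('X_(var a b) * mderiv (var a c) p).

(* cyclic vector v = (x) _a v^(k_a),  v^(k) = e_5^k (lowest weight vector) *)
Definition vac (N : nat) (kk : 'I_N -> nat) : {mpoly C[N * 5]} :=
  \prod_(a < N) 'X_(var a (o 4)) ^+ kk a.

Definition act_seq (N : nat) (zeta : 'I_N -> C) (s : seq ('M[C]_5 * nat))
  (p : {mpoly C[N * 5]}) : {mpoly C[N * 5]} :=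
  foldr (act zeta) p s.

(* filtration: w \in U^{<= d}(o_5[t]) v  (d : int; empty for d < 0) *)
Definition filt (N : nat) (zeta : 'I_N -> C) (kk : 'I_N -> nat) (d : int)
  (w : {mpoly C[N * 5]}) : Prop :=
  exists r : seq (C * seq ('M[C]_5 * nat)),
    (forall e, e \in r ->
       (forall x, x \in e.2 -> in_o5 x.1) /\
       ((\sum_(x <- e.2) x.2)%N%:Z <= d)) /\
    w = \sum_(e <- r) e.1 *: act_seq zeta e.2 (vac kk).

(* X(z) + xi Z(z) - xi^2 Y(z) = sum_i z^i sum_{l<3} xi^l (letter l)_i *)
Definition letter (l : 'I_3) : 'M[C]_5 :=
  match val l with 0 => Xo5 | 1 => Zo5 | _ => - Yo5 end.

(* representative in U^{<= j} v of the coefficient of z^j xi^m of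
   (X(z) + xi Z(z) - xi^2 Y(z))^nu v *)
Definition coeffW (N : nat) (zeta : 'I_N -> C) (kk : 'I_N -> nat)
  (nu j m : nat) : {mpoly C[N * 5]} :=
  \sum_(f : {ffun 'I_nu -> 'I_j.+1 * 'I_3} |
          ((\sum_(s < nu) val (f s).1 == j)%N &&
           (\sum_(s < nu) val (f s).2 == m)%N))
     act_seq zeta [seq (letter (f s).2, val (f s).1) | s <- enum 'I_nu]
       (vac kk).

(* deg_z (X(z)+xi Z(z)-xi^2 Y(z))^nu v <= d in V_M = gr U(o_5[t]) v:
   for every j > d and every m, the coefficient of z^j xi^m (which lies in
   the graded piece F^j / F^{j-1}) vanishes, i.e. its representative lies
   in F^{j-1}. *)
Definition deg_le (N : nat) (zeta : 'I_N -> C) (kk : 'I_N -> nat)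
  (nu : nat) (d : int) : Prop :=
  forall j m : nat, d < j%:Z ->
    filt zeta kk (j%:Z - 1) (coeffW zeta kk nu j m).

End Defs.

(* Main.v *)
Require Import Defs.
From HB Require Import structures.
From mathcomp Require Import all_boot all_order all_algebra.
From mathcomp Require Import mpoly.
From mathcomp Require Import ring.
From mathcomp Require Import zify.
Set Implicit Arguments. Unset Strict Implicit. Unset Printing Implicit Defensive.
Import Order.TTheory GRing.Theory Num.Theory.
Local Open Scope ring_scope.

Section Mat.
Variable C : numClosedFieldType.

Lemma ord5_cases (P : 'I_5 -> Prop) :
  P (@inord 4 0) -> P (inord 1) -> P (inord 2) -> P (inord 3) -> P (inord 4) ->
  forall a, P a.
Proof.
move=> h0 h1 h2 h3 h4 a.
have -> : a = inord a by rewrite inord_val.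
by case: a => [[|[|[|[|[|//]]]]] ?].
Qed.

Lemma inordE5 (i j : nat) : (i < 5)%N -> (j < 5)%N -> ((@inord 4 i == inord j) = (i == j)).
Proof. by move=> hi hj; apply/eqP/eqP => [/(congr1 val)|->//]; rewrite /= !inordK. Qed.

Lemma rev5 (i : nat) : (i < 5)%N -> rev_ord (@inord 4 i) = inord (4 - i).
Proof. move=> hi; apply/val_inj; rewrite /= !inordK //; last by rewrite ltnS leq_subr.
Qed.

Lemma letter_o5 l : in_o5 (letter C l).
Proof.
move=> a b; rewrite /letter.
case: l => [[|[|[|//]]] ?] /=;
rewrite /Xo5 /Yo5 /Zo5;
move: a b; apply: ord5_cases; apply: ord5_cases; rewrite ?rev5 //=;
rewrite !mxE ?inordE5 //=; rewrite ?mulr0 ?mulr1 ?subrr ?subr0 ?sub0r ?addr0 ?oppr0 ?addrN ?addNr //;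
by rewrite ?mulr0 ?mulr1 ?mulrN1 ?addr0 ?addrN ?addNr.
Qed.
End Mat.
Section Eta.
Variable C : numClosedFieldType.
Definition eta (xi : C) : 'M[C]_5 := \sum_(l < 3) xi ^+ l *: letter C l.

Lemma sum5 (V : nmodType) (F : 'I_5 -> V) :
  \sum_(b < 5) F b = F (inord 0) + F (inord 1) + F (inord 2) + F (inord 3) + F (inord 4).
Proof.
rewrite !big_ord_recr big_ord0 /= add0r.
by do !congr (_ + _); congr F; apply/val_inj; rewrite /= inordK.
Qed.

Lemma eta2 xi b : \sum_(c < 5) eta xi b c * eta xi c (inord 4) = 0.
Proof.
rewrite sum5 /eta.
rewrite !big_ord_recr big_ord0 /= add0r !mxE.
move: b; apply: ord5_cases; rewrite /letter /= /Xo5 /Yo5 /Zo5 ?mxE ?inordE5 //=;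
rewrite ?mulr0 ?mulr1 ?subrr ?subr0 ?sub0r ?addr0 ?add0r ?oppr0 ?mul0r ?expr0 ?expr1 ?scale1r.
all: move: (sqrtCK (2:C)); set s := sqrtC 2 => hs.
all: try ring.
transitivity (xi ^+ 2 * (2 - s ^+ 2)); first ring.
by rewrite hs subrr mulr0.
Qed.
End Eta.
Section Filt.
Variables (C : numClosedFieldType) (N : nat) (zeta : 'I_N -> C) (kk : 'I_N -> nat).
Local Notation V := {mpoly C[N * 5]}.
Local Notation filt := (filt zeta kk).

Lemma filt0 d : filt d 0.
Proof. by exists [::]; split => //; rewrite big_nil. Qed.

Lemma filtD d w1 w2 : filt d w1 -> filt d w2 -> filt d (w1 + w2).
Proof.
move=> [r1 [h1 ->]] [r2 [h2 ->]]; exists (r1 ++ r2); split; last by rewrite big_cat.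
by move=> e; rewrite mem_cat => /orP [/h1|/h2].
Qed.

Lemma filtZ d c w : filt d w -> filt d (c *: w).
Proof.
move=> [r [h ->]]; exists [seq (c * e.1, e.2) | e <- r]; split.
  by move=> e /mapP [e' /h he' ->].
by rewrite big_map scaler_sumr; apply: eq_bigr => e _; rewrite scalerA.
Qed.

Lemma filt_sum d (I : Type) (r : seq I) (P : pred I) (F : I -> V) :
  (forall i, P i -> filt d (F i)) -> filt d (\sum_(i <- r | P i) F i).
Proof.
move=> h; apply: (big_ind (filt d)); [exact: filt0|exact: filtD|exact: h].
Qed.

Lemma filt_mono d d' w : d <= d' -> filt d w -> filt d' w.
Proof.
move=> hd [r [h ->]]; exists r; split => // e /h [h1 h2]; split => //.
exact: le_trans hd.
Qed.

Lemma filt_seq d s : (forall x, x \in s -> in_o5 x.1) ->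
  ((\sum_(x <- s) x.2)%N%:Z <= d) -> filt d (act_seq zeta s (vac C kk)).
Proof.
move=> h1 h2; exists [:: (1, s)]; split; first by move=> e; rewrite inE => /eqP ->.
by rewrite big_seq1 scale1r.
Qed.

Definition K nu J j m : V :=
  \sum_(f : {ffun 'I_nu -> 'I_J.+1 * 'I_3} |
          ((\sum_(s < nu) val (f s).1 == j)%N &&
           (\sum_(s < nu) val (f s).2 == m)%N))
     act_seq zeta [seq (letter C (f s).2, val (f s).1) | s <- enum 'I_nu]
       (vac C kk).

Lemma coeffW_K nu j m : coeffW zeta kk nu j m = K nu j j m.
Proof. by []. Qed.

Lemma filt_K nu J j m : filt j%:Z (K nu J j m).
Proof.
apply: filt_sum => f /andP [/eqP hj _]; apply: filt_seq.
  by move=> x /mapP [s _ ->]; apply: letter_o5.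
by rewrite big_map /= -hj big_enum /=.
Qed.
End Filt.

Section Der.
Variables (C : numClosedFieldType) (N : nat) (zeta : 'I_N -> C) (kk : 'I_N -> nat).
Local Notation V := {mpoly C[N * 5]}.
Local Notation X a b := ('X_(var a b) : V).

Lemma var_inj (a a' : 'I_N) (b b' : 'I_5) : var a b = var a' b' -> a = a' /\ b = b'.
Proof.
have [g hK _] := curry_mxvec_bij N 5.
move=> h; have := hK (a, b) isT; have := hK (a', b') isT.
rewrite /= -/(var a b) -/(var a' b') h => -> [-> ->]; by [].
Qed.

Lemma mderivXv (i j : 'I_(N * 5)) : mderiv i ('X_j : V) = (j == i)%:R.
Proof.
rewrite mderivX mnm1E; case: eqP => [->|_]; last by rewrite scale0r.
rewrite scale1r (_ : (U_(i) - U_(i))%MM = 0%MM) ?mpolyX0 //.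
by apply/mnmP => x; rewrite mnmBE mnm0E subnn.
Qed.

Definition Dm (A : 'M[C]_5) (a : 'I_N) (p : V) : V :=
  \sum_(b < 5) \sum_(c < 5) A b c *: (X a b * mderiv (var a c) p).

Lemma act_Dm A i p : act zeta (A, i) p = \sum_(a < N) zeta a ^+ i *: Dm A a p.
Proof.
rewrite /act /Dm; apply: eq_bigr => a _; rewrite scaler_sumr; apply: eq_bigr => b _.
by rewrite scaler_sumr; apply: eq_bigr => c _; rewrite scalerA.
Qed.

Lemma Dm_add A a p q : Dm A a (p + q) = Dm A a p + Dm A a q.
Proof.
rewrite /Dm -big_split; apply: eq_bigr => b _; rewrite -big_split.
by apply: eq_bigr => c _; rewrite mderivD mulrDr scalerDr.
Qed.

Lemma Dm_scale A a c0 p : Dm A a (c0 *: p) = c0 *: Dm A a p.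
Proof.
rewrite /Dm scaler_sumr; apply: eq_bigr => b _; rewrite scaler_sumr.
by apply: eq_bigr => c _; rewrite mderivZ -scalerAr !scalerA mulrC.
Qed.

Lemma Dm0 A a : Dm A a 0 = 0.
Proof. by rewrite /Dm big1 // => b _; rewrite big1 // => c _; rewrite mderiv0 mulr0 scaler0. Qed.

Lemma Dm_sum A a (I : Type) (r : seq I) (P : pred I) (F : I -> V) :
  Dm A a (\sum_(i <- r | P i) F i) = \sum_(i <- r | P i) Dm A a (F i).
Proof. exact: (big_morph _ (Dm_add A a) (Dm0 A a)). Qed.

Lemma DmM A a p q : Dm A a (p * q) = Dm A a p * q + p * Dm A a q.
Proof.
rewrite /Dm mulr_suml mulr_sumr -big_split; apply: eq_bigr => b _.
rewrite mulr_suml mulr_sumr -big_split; apply: eq_bigr => c _.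
rewrite mderivM mulrDr scalerDr -scalerAl -scalerAr; congr (_ + _).
  by rewrite mulrA.
by rewrite mulrA (mulrC _ p) mulrA.
Qed.

Lemma Dm1 A a : Dm A a 1 = 0.
Proof.
by rewrite /Dm big1 // => b _; rewrite big1 // => c _; rewrite -mpolyC1 mderivC mulr0 scaler0.
Qed.

Lemma DmX A a p n : Dm A a (p ^+ n) = (p ^+ n.-1 * Dm A a p) *+ n.
Proof.
elim: n => [|n IH]; first by rewrite expr0 Dm1 mulr0n.
rewrite exprS DmM IH /= mulrnAr mulrA -exprS.
case: n {IH} => [|n]; first by rewrite expr0 mulr1 mulr0n mul1r addr0.
by rewrite (mulrC (Dm A a p)) [RHS]mulrS.
Qed.

Lemma DmXv A a a' c0 :
  Dm A a (X a' c0) = if a' == a then \sum_(b < 5) A b c0 *: X a b else 0.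
Proof.
rewrite /Dm; case: eqP => [<-|ne].
  apply: eq_bigr => b _; rewrite (bigD1 c0) //= big1 ?addr0.
    by rewrite mderivXv eqxx mulr1.
  move=> c nc; rewrite mderivXv; case: eqP => [/var_inj [_ e]|]; last by rewrite mulr0 scaler0.
  by rewrite e eqxx in nc.
apply: big1 => b _; apply: big1 => c _; rewrite mderivXv.
by case: eqP => [/var_inj [e _]|]; [by [] | rewrite mulr0 scaler0].
Qed.
End Der.

Section Mono.
Variables (C : numClosedFieldType) (N : nat) (zeta : 'I_N -> C) (kk : 'I_N -> nat).
Variable xi : C.
Local Notation V := {mpoly C[N * 5]}.
Local Notation X a b := ('X_(var a b) : V).
Local Notation A := (eta xi).

Definition wv (a : 'I_N) : V := \sum_(b < 5) A b (inord 4) *: X a b.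
Definition Fm (a : 'I_N) (m : nat) : V :=
  (kk a ^_ m)%:R *: (X a (inord 4) ^+ (kk a - m) * wv a ^+ m).
Definition mono (n : 'I_N -> nat) : V := \prod_(a < N) Fm a (n a).
Definition incr (n : 'I_N -> nat) (a : 'I_N) := fun a' => (n a' + (a' == a))%N.

Lemma Dm_w a a' : Dm A a (wv a') = 0.
Proof.
rewrite /wv Dm_sum; under eq_bigr do rewrite Dm_scale DmXv.
case: eqP => [_|_]; last by apply: big1 => b _; rewrite scaler0.
under eq_bigr do rewrite scaler_sumr.
rewrite exchange_big /=; apply: big1 => b' _.
under eq_bigr do rewrite scalerA.
by rewrite -scaler_suml (eq_bigr (fun c => A b' c * A c (inord 4))) ?eta2 ?scale0r // => c _; rewrite mulrC.
Qed.

Lemma Dm_F_other a a' m : a' != a -> Dm A a (Fm a' m) = 0.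
Proof.
move=> ne; rewrite /Fm Dm_scale DmM !DmX Dm_w DmXv (negbTE ne).
by rewrite !mulr0 !mul0rn !mulr0 mul0r add0r scaler0.
Qed.

Lemma Dm_F a m : Dm A a (Fm a m) = Fm a m.+1.
Proof.
rewrite /Fm Dm_scale DmM !DmX Dm_w DmXv eqxx -/(wv a) mulr0 mul0rn mulr0 addr0.
rewrite ffactnSr natrM -scalerA; congr (_ *: _).
by rewrite scaler_nat -mulrnAl -mulrA -exprS subnS mulrnAl.
Qed.

Lemma Dm_mono a n : Dm A a (mono n) = mono (incr n a).
Proof.
have h0 : Dm A a (\prod_(i < N | i != a) Fm i (n i)) = 0.
  apply: (big_ind (fun q => Dm A a q = 0)).
  - exact: Dm1.
  - by move=> x y hx hy; rewrite DmM hx hy mul0r mulr0 addr0.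
  - by move=> a' ne; apply: Dm_F_other.
rewrite /mono (bigD1 a) //= DmM Dm_F h0 mulr0 addr0.
rewrite [in RHS](bigD1 a) //= /incr eqxx addn1; congr (_ * _).
by apply: eq_bigr => a' ne; rewrite (negbTE ne) addn0.
Qed.

Lemma act_mono i n :
  act zeta (A, i) (mono n) = \sum_(a < N) zeta a ^+ i *: mono (incr n a).
Proof. by rewrite act_Dm; apply: eq_bigr => a _; rewrite Dm_mono. Qed.

Lemma mono0 : mono (fun _ => 0%N) = vac C kk.
Proof.
rewrite /mono /vac; apply: eq_bigr => a _.
by rewrite /Fm ffactn0 expr0 mulr1 subn0 scale1r.
Qed.

Lemma mono_big n a : (kk a < n a)%N -> mono n = 0.
Proof.
move=> h; rewrite /mono (bigD1 a) //= /Fm ffact_small //.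
by rewrite scale0r mul0r.
Qed.
End Mono.

Section Ffun.
Variable T : finType.

Definition fcons n (x : T) (g : {ffun 'I_n -> T}) : {ffun 'I_n.+1 -> T} :=
  [ffun s => if unlift ord0 s is Some s' then g s' else x].
Definition ftail n (f : {ffun 'I_n.+1 -> T}) : {ffun 'I_n -> T} :=
  [ffun s => f (lift ord0 s)].

Lemma fcons0 n x (g : {ffun 'I_n -> T}) : fcons x g ord0 = x.
Proof. by rewrite ffunE unlift_none. Qed.

Lemma fconsS n x (g : {ffun 'I_n -> T}) s : fcons x g (lift ord0 s) = g s.
Proof. by rewrite ffunE liftK. Qed.

Lemma big_ffunS (R : Type) (idx : R) (op : Monoid.com_law idx) n
  (F : {ffun 'I_n.+1 -> T} -> R) :
  \big[op/idx]_(f : {ffun 'I_n.+1 -> T}) F f =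
  \big[op/idx]_(x : T) \big[op/idx]_(g : {ffun 'I_n -> T}) F (fcons x g).
Proof.
rewrite pair_bigA /=.
rewrite (reindex (fun p : T * {ffun 'I_n -> T} => fcons p.1 p.2)) //.
exists (fun f : {ffun 'I_n.+1 -> T} => (f ord0, ftail f)) => [[x g] _|f _] /=.
  by rewrite fcons0; congr pair; apply/ffunP => s; rewrite ffunE fconsS.
apply/ffunP => s; rewrite ffunE; case: unliftP => [s' ->|->] //.
by rewrite ffunE.
Qed.

Lemma I0_False (s : 'I_0) : False. Proof. by case: s. Qed.
Definition ffun0 : {ffun 'I_0 -> T} := [ffun s => False_rect T (I0_False s)].

Lemma big_ffun0 (R : Type) (idx : R) (op : Monoid.law idx) (F : {ffun 'I_0 -> T} -> R) :
  \big[op/idx]_(f : {ffun 'I_0 -> T}) F f = F ffun0.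
Proof.
apply: big_pred1 => f /=; apply/esym/eqP/ffunP => s; case: (I0_False s).
Qed.
End Ffun.

Section ActLin.
Variables (C : numClosedFieldType) (N : nat) (zeta : 'I_N -> C).
Local Notation V := {mpoly C[N * 5]}.

Lemma act_add Ai (p q : V) : act zeta Ai (p + q) = act zeta Ai p + act zeta Ai q.
Proof.
rewrite /act -big_split; apply: eq_bigr => a _; rewrite -big_split; apply: eq_bigr => b _.
by rewrite -big_split; apply: eq_bigr => c _; rewrite mderivD mulrDr scalerDr.
Qed.

Lemma act_scale Ai c0 (p : V) : act zeta Ai (c0 *: p) = c0 *: act zeta Ai p.
Proof.
rewrite /act scaler_sumr; apply: eq_bigr => a _; rewrite scaler_sumr; apply: eq_bigr => b _.
rewrite scaler_sumr; apply: eq_bigr => c _.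
by rewrite mderivZ -scalerAr !scalerA mulrC.
Qed.

Lemma act0 Ai : act zeta Ai (0 : V) = 0.
Proof.
rewrite /act big1 // => a _; rewrite big1 // => b _; rewrite big1 // => c _.
by rewrite mderiv0 mulr0 scaler0.
Qed.

Lemma act_sum Ai (I : Type) (r : seq I) (P : pred I) (F : I -> V) :
  act zeta Ai (\sum_(i <- r | P i) F i) = \sum_(i <- r | P i) act zeta Ai (F i).
Proof. exact: (big_morph _ (act_add Ai) (act0 Ai)). Qed.

Lemma act_addM (A B : 'M[C]_5) i (p : V) :
  act zeta (A + B, i) p = act zeta (A, i) p + act zeta (B, i) p.
Proof.
rewrite /act -big_split; apply: eq_bigr => a _; rewrite -big_split; apply: eq_bigr => b _.
by rewrite -big_split; apply: eq_bigr => c _; rewrite /= mxE mulrDr scalerDl.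
Qed.

Lemma act_scaleM (A : 'M[C]_5) c0 i (p : V) :
  act zeta (c0 *: A, i) p = c0 *: act zeta (A, i) p.
Proof.
rewrite /act scaler_sumr; apply: eq_bigr => a _; rewrite scaler_sumr; apply: eq_bigr => b _.
rewrite scaler_sumr; apply: eq_bigr => c _.
by rewrite /= mxE scalerA mulrCA.
Qed.

Lemma act0M i (p : V) : act zeta (0, i) p = 0.
Proof.
rewrite /act big1 // => a _; rewrite big1 // => b _; rewrite big1 // => c _.
by rewrite /= mxE mulr0 scale0r.
Qed.

Lemma act_eta xi i (p : V) :
  act zeta (eta xi, i) p = \sum_(l < 3) xi ^+ l *: act zeta (letter C l, i) p.
Proof.
rewrite /eta.
rewrite (big_morph (fun A => act zeta (A, i) p) (fun A B => act_addM A B i p) (act0M i p)).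
by apply: eq_bigr => l _; rewrite act_scaleM.
Qed.
End ActLin.

Section KX.
Variables (C : numClosedFieldType) (N : nat) (zeta : 'I_N -> C) (kk : 'I_N -> nat).
Variable xi : C.
Local Notation V := {mpoly C[N * 5]}.

Definition Kx n J j : V :=
  \sum_(f : {ffun 'I_n -> 'I_J.+1 * 'I_3} | (\sum_(s < n) val (f s).1 == j)%N)
     xi ^+ (\sum_(s < n) val (f s).2) *:
     act_seq zeta [seq (letter C (f s).2, val (f s).1) | s <- enum 'I_n] (vac C kk).

Lemma sum_fcons (T : finType) n (G : T -> nat) (x : T) (g : {ffun 'I_n -> T}) :
  (\sum_(s < n.+1) G (fcons x g s) = G x + \sum_(s < n) G (g s))%N.
Proof. by rewrite big_ord_recl fcons0; congr addn; apply: eq_bigr => s _; rewrite fconsS. Qed.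

Lemma seq_fcons (T : finType) (U : Type) n (H : T -> U) (x : T) (g : {ffun 'I_n -> T}) :
  [seq H (fcons x g s) | s <- enum 'I_n.+1] = H x :: [seq H (g s) | s <- enum 'I_n].
Proof. by rewrite enum_ordSl /= fcons0 -map_comp; congr cons; apply: eq_map => s /=; rewrite fconsS. Qed.

Lemma K_Kx n J j M : (2 * n < M)%N ->
  \sum_(m < M) xi ^+ m *: K zeta kk n J j m = Kx n J j.
Proof.
move=> hM; rewrite /K /Kx.
under eq_bigr do rewrite scaler_sumr big_mkcondr.
rewrite exchange_big /=; apply: eq_bigr => f _.
rewrite -big_mkcond /=.
under eq_bigl do rewrite eq_sym.
rewrite (big_ord1_eq _ (fun m : nat => xi ^+ m *: act_seq zeta [seq (letter C (f s).2, val (f s).1) | s <- enum 'I_n] (vac C kk))) ifT //.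
apply: leq_ltn_trans hM.
have -> : (2 * n = \sum_(s < n) 2)%N by rewrite sum_nat_const card_ord mulnC.
apply: leq_sum => s _; rewrite -ltnS; exact: ltn_ord.
Qed.

Lemma Kx_rec n J j : Kx n.+1 J j =
  \sum_(i < J.+1 | (i <= j)%N) act zeta (eta xi, val i) (Kx n J (j - i)%N).
Proof.
transitivity (\sum_(i < J.+1) \sum_(l < 3) (if (i <= j)%N then
      xi ^+ l *: act zeta (letter C l, val i) (Kx n J (j - i)%N) else 0)); last first.
  rewrite [RHS]big_mkcond /=; apply: eq_bigr => i _; case: ifP => _.
    by rewrite act_eta.
  by rewrite big1.
rewrite pair_bigA /= /Kx big_mkcond big_ffunS /=.
apply: eq_bigr => -[i l] _ /=.
under eq_bigr => g _ do rewrite (sum_fcons (fun x : 'I_J.+1 * 'I_3 => val x.1))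
   (sum_fcons (fun x : 'I_J.+1 * 'I_3 => val x.2))
   (seq_fcons (fun x : 'I_J.+1 * 'I_3 => (letter C x.2, val x.1))) /=.
case: (leqP i j) => hij; last first.
  apply: big1 => g _; rewrite ifF //; apply/negbTE; rewrite neq_ltn.
  by apply/orP; right; apply: leq_trans hij (leq_addr _ _).
rewrite /= act_sum scaler_sumr [RHS]big_mkcond /=; apply: eq_bigr => g _.
rewrite -{1}(subnKC hij) eqn_add2l; case: ifP => // _.
by rewrite act_scale scalerA exprD.
Qed.
End KX.

Section Closed.
Variables (C : numClosedFieldType) (N : nat) (zeta : 'I_N -> C) (kk : 'I_N -> nat).
Variable xi : C.
Local Notation V := {mpoly C[N * 5]}.

Definition Tp J (c : C) : {poly C} := \sum_(i < J.+1) c ^+ i *: 'X^i.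
Definition hJ J n (y : 'I_n -> C) j := (\prod_(s < n) Tp J (y s))`_j.
Definition cnt n (a : {ffun 'I_n -> 'I_N}) := fun a0 => (\sum_(s < n) (a s == a0))%N.

Lemma coefT J c i : (i <= J)%N -> (Tp J c)`_i = c ^+ i.
Proof.
move=> hi; rewrite /Tp coef_sumMXn.
rewrite (big_ord1_eq _ (fun i : nat => c ^+ i)) ifT //.
Qed.

Lemma mono_ext n n' : (forall a, n a = n' a) -> mono kk xi n = mono kk xi n'.
Proof. by move=> h; rewrite /mono; apply: eq_bigr => a _; rewrite h. Qed.

Lemma hJ_cons J n a0 (a : {ffun 'I_n -> 'I_N}) j : (j <= J)%N ->
  hJ J (fun s => zeta (fcons a0 a s)) j =
  \sum_(i < j.+1) zeta a0 ^+ i * hJ J (fun s => zeta (a s)) (j - i)%N.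
Proof.
move=> hj; rewrite /hJ big_ord_recl fcons0 coefM; apply: eq_big => // i _.
rewrite coefT; last by apply: leq_trans hj; rewrite -ltnS.
by rewrite (eq_bigr (fun s => Tp J (zeta (a s)))) // => s _; rewrite fconsS.
Qed.

Lemma Kx_closed n J j : (j <= J)%N ->
  Kx zeta kk xi n J j =
  \sum_(a : {ffun 'I_n -> 'I_N}) hJ J (fun s => zeta (a s)) j *: mono kk xi (cnt a).
Proof.
elim: n j => [|n IH] j hj.
  rewrite /Kx big_mkcond !big_ffun0 /= big_ord0 enum_ord0 /= /hJ big_ord0 coef1.
  rewrite (mono_ext (n' := fun _ => 0%N)); last by move=> a; rewrite /cnt big_ord0.
  rewrite mono0 eq_sym; case: eqP => _; last by rewrite scale0r.
  by rewrite big_ord0 expr0 !scale1r.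
rewrite Kx_rec.
rewrite (eq_bigl (fun i : 'I_J.+1 => (i < j.+1)%N)) //.
rewrite -(big_ord_widen J.+1 (fun i => act zeta (eta xi, i) (Kx zeta kk xi n J (j - i)%N))); last by [].
transitivity (\sum_(i < j.+1) \sum_(a : {ffun 'I_n -> 'I_N}) \sum_(a0 < N)
   (zeta a0 ^+ i * hJ J (fun s => zeta (a s)) (j - i)%N) *: mono kk xi (incr (cnt a) a0)).
  apply: eq_bigr => i _; rewrite IH; last by apply: leq_trans (leq_subr _ _) hj.
  rewrite act_sum; apply: eq_bigr => a _.
  rewrite act_scale act_mono scaler_sumr; apply: eq_bigr => a0 _.
  by rewrite scalerA mulrC.
rewrite [RHS]big_ffunS exchange_big /=.
under eq_bigr do rewrite exchange_big /=.
rewrite exchange_big /=; apply: eq_bigr => a0 _; apply: eq_bigr => a _.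
rewrite hJ_cons // scaler_suml; apply: eq_bigr => i _; congr (_ *: _).
apply: mono_ext => a'; rewrite /incr /cnt.
by rewrite (sum_fcons (fun x => nat_of_bool (x == a'))) addnC eq_sym.
Qed.
End Closed.

Section PolyFacts.
Variable C : numClosedFieldType.

Definition ql (c : C) : {poly C} := 1 - c%:P * 'X.

Lemma size_ql c : (size (ql c) <= 2)%N.
Proof.
rewrite /ql; apply: leq_trans (size_add _ _) _; rewrite geq_max size_poly1 /= size_opp.
apply: leq_trans (size_mul_leq _ _) _; rewrite size_polyX.
by case: (size c%:P) (size_polyC_leq1 c) => [|[|]].
Qed.

Lemma size_qlX c e : (size (ql c ^+ e) <= e.+1)%N.
Proof.
apply: leq_trans (leqSpred _) _; rewrite ltnS size_exp.
have h1 : ((size (ql c)).-1 <= 1)%N.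
  by case: (size (ql c)) (size_ql c) => [|s].
by have := leq_mul h1 (leqnn e); rewrite mul1n.
Qed.

Lemma size_prod_bound n (F : 'I_n -> {poly C}) (e : 'I_n -> nat) :
  (forall i, size (F i) <= (e i).+1)%N ->
  (size (\prod_(i < n) F i)%R <= (\sum_(i < n) e i).+1)%N.
Proof.
move=> h; elim/big_rec2: _ => [|i x y _ hy]; first by rewrite size_poly1.
apply: leq_trans (size_mul_leq _ _) _.
have := h i; lia.
Qed.

Definition unitJ J (p : {poly C}) := forall i, (i <= J)%N -> p`_i = (i == 0%N)%:R.

Lemma unitJ_mul J p q i : unitJ J p -> (i <= J)%N -> (p * q)`_i = q`_i.
Proof.
move=> hp hi; rewrite coefM big_ord_recl /= hp // eqxx mul1r subn0 big1 ?addr0 // => k _.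
by rewrite hp ?mul0r //; apply: leq_trans hi; rewrite /bump /=; exact: ltn_ord.
Qed.

Lemma unitJ_prod J n (F : 'I_n -> {poly C}) :
  (forall s, unitJ J (F s)) -> unitJ J (\prod_(s < n) F s).
Proof.
move=> h; apply: (big_ind (unitJ J)).
- by move=> i _; rewrite coef1.
- by move=> p q hp hq i hi; rewrite (unitJ_mul _ hp hi) hq.
- by move=> s _; apply: h.
Qed.

Lemma qT_unit J c : unitJ J (ql c * Tp J c).
Proof.
move=> i hi; rewrite /ql mulrBl mul1r coefB -mulrA coefCM coefXM coefT //.
case: i hi => [|i] hi /=; first by rewrite mulr0 subr0 expr0.
by rewrite coefT ?exprS ?subrr //; apply: ltnW.
Qed.

Lemma poly_vanish (M : nat) (w : nat -> C) :
  (forall x : C, \sum_(i < M) w i * x ^+ i = 0) -> forall i, (i < M)%N -> w i = 0.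
Proof.
move=> h i hi.
pose q : {poly C} := \poly_(i < M) w i.
suff q0 : q = 0 by move: (congr1 (fun p : {poly C} => p`_i) q0); rewrite coef_poly hi coef0.
apply/eqP; apply: contraT => nq.
have := max_poly_roots nq (rs := [seq (k%:R : C) | k <- iota 0 (size q)]).
rewrite size_map size_iota ltnn; apply.
  by apply/allP => x /mapP [k _ ->]; rewrite /root horner_poly h.
rewrite map_inj_uniq ?iota_uniq //.
by move=> a b /eqP; rewrite eqr_nat => /eqP.
Qed.
End PolyFacts.

Section Main.
Variables (C : numClosedFieldType) (N : nat) (zeta : 'I_N -> C) (kk : 'I_N -> nat).
Variable nu : nat.
Local Notation V := {mpoly C[N * 5]}.

Definition Dp : {poly C} := \prod_(a0 < N) ql (zeta a0) ^+ minn nu (kk a0).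
Definition Ssum := (\sum_(a0 < N) minn nu (kk a0))%N.

Lemma cnt_le (a : {ffun 'I_nu -> 'I_N}) a0 : (cnt a a0 <= nu)%N.
Proof.
rewrite /cnt; have h : (\sum_(s < nu) 1 = nu)%N by rewrite sum_nat_const card_ord muln1.
by rewrite -[X in (_ <= X)%N]h; apply: leq_sum => s _; case: (_ == _).
Qed.

Lemma cnt_sum (a : {ffun 'I_nu -> 'I_N}) : (\sum_(a0 < N) cnt a a0)%N = nu.
Proof.
rewrite /cnt exchange_big /= -[RHS]card_ord -sum1_card; apply: eq_bigr => s _.
by rewrite (bigD1 (a s)) //= eqxx big1 // => a0 /negbTE; rewrite eq_sym => ->.
Qed.

Lemma prod_cnt (a : {ffun 'I_nu -> 'I_N}) (F : 'I_N -> {poly C}) :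
  \prod_(s < nu) F (a s) = \prod_(a0 < N) F a0 ^+ cnt a a0.
Proof.
under [RHS]eq_bigr do rewrite /cnt -prodrXr.
rewrite exchange_big /=; apply: eq_bigr => s _.
rewrite (bigD1 (a s)) //= eqxx expr1 big1 ?mulr1 // => a0 /negbTE.
by rewrite eq_sym => ->; rewrite expr0.
Qed.

Lemma coef_vanish (a : {ffun 'I_nu -> 'I_N}) J j :
  (forall a0, cnt a a0 <= kk a0)%N -> (j <= J)%N -> (Ssum < j + nu)%N ->
  (Dp * \prod_(s < nu) Tp J (zeta (a s)))`_j = 0.
Proof.
move=> hc hj hS'.
have hS : (Ssum - nu < j)%N.
  have : (nu <= Ssum)%N.
    rewrite -{1}(cnt_sum a) /Ssum; apply: leq_sum => a0 _; by rewrite leq_min cnt_le hc.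
  move: hS'; lia.
pose E := \prod_(a0 < N) ql (zeta a0) ^+ (minn nu (kk a0) - cnt a a0).
have hD : Dp = \prod_(s < nu) ql (zeta (a s)) * E.
  rewrite (prod_cnt a (fun a0 => ql (zeta a0))) /Dp /E -big_split; apply: eq_bigr => a0 _ /=.
  by rewrite -exprD subnKC // leq_min cnt_le hc.
have -> : Dp * \prod_(s < nu) Tp J (zeta (a s)) =
    (\prod_(s < nu) (ql (zeta (a s)) * Tp J (zeta (a s)))) * E.
  by rewrite hD big_split /= mulrAC.
rewrite (unitJ_mul _ (unitJ_prod (fun s => @qT_unit _ J (zeta (a s)))) hj).
apply: nth_default; apply: leq_trans (size_prod_bound (fun a0 => size_qlX _ _)) _.
rewrite sumnB; last by move=> a0 _; rewrite leq_min cnt_le hc.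
by rewrite cnt_sum.
Qed.

Lemma vanishV (M : nat) (w : nat -> V) :
  (forall x : C, \sum_(i < M) x ^+ i *: w i = 0) -> forall i, (i < M)%N -> w i = 0.
Proof.
move=> h i hi; apply/mpolyP => e; rewrite mcoeff0.
apply: (poly_vanish (w := fun i => (w i)@_e)) hi => x.
transitivity (mcoeff e (\sum_(i < M) x ^+ i *: w i)); last by rewrite h mcoeff0.
rewrite raddf_sum; apply: eq_bigr => k _.
change ((w k)@_e * x ^+ k = (x ^+ k *: w k)@_e); by rewrite mcoeffZ mulrC.
Qed.

Lemma Dp0 : Dp`_0 = 1.
Proof.
rewrite -horner_coef0 /Dp horner_prod; apply: big1 => a0 _.
by rewrite horner_exp /ql !hornerE subr0 expr1n.
Qed.

Lemma W_zero j M : (2 * nu < M)%N -> (Ssum < j + nu)%N ->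
  forall m, (m < M)%N ->
  \sum_(l < j.+1) Dp`_l *: K zeta kk nu j (j - l)%N m = 0.
Proof.
move=> hM hS; apply: vanishV => x.
under eq_bigr do rewrite scaler_sumr.
rewrite exchange_big /=.
under eq_bigr => l _ do (under eq_bigr do rewrite scalerA mulrC -scalerA; rewrite -scaler_sumr K_Kx //).
under eq_bigr => l _ do rewrite Kx_closed ?leq_subr // scaler_sumr.
rewrite exchange_big /=; apply: big1 => a _.
under eq_bigr do rewrite scalerA.
rewrite -scaler_suml.
have -> : \sum_(i < j.+1) Dp`_i * hJ j (fun s => zeta (a s)) (j - i)%N =
          (Dp * \prod_(s < nu) Tp j (zeta (a s)))`_j by rewrite coefM.
case: (boolP [forall a0, cnt a a0 <= kk a0]%N) => [/forallP h|/forallPn [a0 ha0]].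
  by rewrite coef_vanish // scale0r.
have ha : (kk a0 < cnt a a0)%N by rewrite ltnNge.
by rewrite (mono_big _ ha) scaler0.
Qed.
End Main.

Lemma sum_minE (N k nu : nat) (kk : 'I_N -> nat) : (forall a, kk a <= k)%N ->
  (\sum_(1 <= i < k.+1) (minn nu i * #|[set a | kk a == i]|))%N =
  (\sum_(a0 < N) minn nu (kk a0))%N.
Proof.
move=> hk.
have hc i : #|[set a | kk a == i]| = (\sum_(a < N) (kk a == i))%N.
  rewrite -sum1_card big_mkcond /=; apply: eq_bigr => a _; rewrite inE; by case: (_ == _).
under eq_bigr do rewrite hc big_distrr /=.
rewrite exchange_big /=; apply: eq_bigr => a _.
have -> : (\sum_(1 <= i < k.+1) minn nu i * (kk a == i))%N =
          (\sum_(0 <= i < k.+1) minn nu i * (kk a == i))%N.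
  by rewrite [in RHS]big_ltn // minn0 mul0n add0n.
rewrite big_mkord (bigD1 (Ordinal (leq_ltn_trans (hk a) (ltnSn k)))) //= eqxx muln1.
rewrite big1 ?addn0 // => i ne; rewrite (_ : (kk a == i) = false) ?muln0 //.
by apply/negbTE; apply: contra ne => /eqP e; apply/eqP/val_inj; rewrite /= e.
Qed.

Unset Implicit Arguments.

Theorem proposition3p7 (C : numClosedFieldType) (k N : nat)
  (kk : 'I_N -> nat) (zeta : 'I_N -> C) :
  (1 <= k)%N -> (forall a, kk a <= k)%N -> injective zeta ->
  forall nu : nat,
    deg_le zeta kk nu
      ((\sum_(1 <= i < k.+1) (minn nu i * #|[set a | kk a == i]|))%N%:Z
       - nu%:Z).
Proof.
move=> _ hk _ nu; rewrite sum_minE // => j m hj.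
rewrite coeffW_K.
have hS : ((\sum_(a0 < N) minn nu (kk a0)) < j + nu)%N.
  by move: hj; rewrite ltrBlDr -PoszD ltz_nat.
have hW := @W_zero C N zeta kk nu j (m + 2 * nu).+1 ltac:(lia) hS m ltac:(lia).
move: hW; rewrite big_ord_recl subn0 Dp0 scale1r => /eqP; rewrite addr_eq0 => /eqP ->.
rewrite -scaleN1r; apply: filtZ; apply: filt_sum => l _; apply: filtZ.
apply: filt_mono (filt_K _ _ _ _ _ _).
have hl := ltn_ord l; rewrite lift0.
rewrite (_ : j%:Z - 1 = (j - 1)%N%:Z); last by rewrite subzn //; lia.
rewrite lez_nat; lia.
Qed.
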